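(* Let $\alpha=(\alpha_n)_{n\ge1}$ be a non-negative non-increasing null sequence with $\alpha_1\le1$ and let $\omega\in(0,1)$. Suppose $C>0$ is a constant such that $$K^{(\omega)}_{n+j}(\alpha)\ge C\Big(\sum_{i=0}^nK^{(\omega)}_i(\alpha)\Big)^2$$ for all $j\in\mathbb N$ and $n\in\mathbb N\cup\{0\}$. Then $\langle\alpha\rangle$ is a stable Calkin space.
   Context: $K^{(\omega)}_n(\alpha)=|\{m:\omega^{n+1}<\alpha_m\le\omega^n\}|$ for $n\ge0$. $c_0$: complex null sequences; $\beta^\star$: non-increasing rearrangement of $(|\beta_n|)$. A Calkin space is a linear subspace $\mathfrak i\subseteq c_0$ such that $\gamma\in\mathfrak i,\beta\in c_0,\beta^\star\le\gamma^\star$ imply $\beta\in\mathfrak i$; $\langle\alpha\rangle$ is the smallest Calkin space containing $\alpha$. For $\beta,\gamma\in c_0$, $\beta\otimes\gamma$ is the non-increasing rearrangement with multiplicities of $(|\beta_i\gamma_j|)_{i,j}$; $\mathfrak i$ is stable if the smallest Calkin space containing all $\beta\otimes\gamma$, $\beta,\gamma\in\mathfrak i$, equals $\mathfrak i$. *)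

(* Defs.v *)
From HB Require Import structures.
From mathcomp Require Import all_boot all_order all_algebra.
From mathcomp Require Import all_classical all_reals.
From mathcomp Require Import topology normedtype sequences.
From mathcomp Require Import complex finmap.
Set Implicit Arguments.
Unset Strict Implicit.
Unset Printing Implicit Defensive.
Import Order.TTheory GRing.Theory Num.Theory numFieldNormedType.Exports.
Local Open Scope classical_set_scope.
Local Open Scope ring_scope.

Section CalkinDefs.
Variable R : realType.

Definition modc (z : R[i]) : R := Normc.normc z.

(* null sequences (c_0) of complex numbers, indexed from 0 *)
Definition c0 (b : nat -> R[i]) : Prop :=
  (fun n => modc (b n)) @ \oo --> (0 : R).

(* non-increasing rearrangement (with multiplicities) of a family f of
   non-negative reals indexed by I (min-max formula):
   rearr f n = inf over sets F of at most n indices of sup_{i notin F} f i.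
   Index n = 0 is the first (largest) term. *)
Definition rearr (I : eqType) (f : I -> R) (n : nat) : R :=
  inf [set sup [set f i | i in [set i | i \notin s]] |
        s in [set s : seq I | (size s <= n)%N]].

Definition star (b : nat -> R[i]) : nat -> R :=
  rearr (fun k : nat => modc (b k)).

Definition calkin (I : set (nat -> R[i])) : Prop :=
  [/\ I `<=` c0,
      I (fun _ => 0),
      (forall b g, I b -> I g -> I (fun n => b n + g n)),
      (forall (c : R[i]) b, I b -> I (fun n => c * b n)) &
      (forall g b, I g -> c0 b -> (forall n, star b n <= star g n) -> I b)].

Definition calkin_gen (S : set (nat -> R[i])) : set (nat -> R[i]) :=
  [set b | forall I, calkin I -> S `<=` I -> I b].

Definition calkin_span (a : nat -> R[i]) := calkin_gen [set a].

Definition tensor (b g : nat -> R[i]) : nat -> R[i] :=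
  fun n => ((rearr (fun p : nat * nat => modc (b p.1 * g p.2)) n)%:C)%C.

Definition stable (I : set (nat -> R[i])) : Prop :=
  calkin_gen [set t | exists b g, [/\ I b, I g & t = tensor b g]] = I.

(* K^{(omega)}_n(alpha) = |{m : omega^{n+1} < alpha_m <= omega^n}|
   (cardinality of a set of indices; this set is finite for the sequences
   considered, fset_set returns the empty set otherwise) *)
Definition Kw (w : R) (a : nat -> R) (n : nat) : nat :=
  (#|` fset_set [set m | w ^+ n.+1 < a m <= w ^+ n]|)%fset.

End CalkinDefs.

(* Main.v *)
Require Import Defs.
From HB Require Import structures.
From mathcomp Require Import all_boot all_order all_algebra.
From mathcomp Require Import all_classical all_reals.
From mathcomp Require Import topology normedtype sequences.
From mathcomp Require Import complex finmap.
From mathcomp Require Import zify ring lra.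
Import Order.TTheory GRing.Theory Num.Theory numFieldNormedType.Exports.
Local Open Scope classical_set_scope.
Local Open Scope ring_scope.
Set Implicit Arguments.
Unset Strict Implicit.
Arguments modc : simpl never.
Section S.
Variable R : realType.
Lemma modc_ge0 (z : R[i]) : 0 <= modc z.
Proof. by case: z => x y; rewrite /modc /= sqrtr_ge0. Qed.
Lemma modcR (x : R) : modc (x%:C)%C = `|x|.
Proof. by rewrite /modc /= expr0n /= addr0 sqrtr_sqr. Qed.
Lemma modcD (z u : R[i]) : modc (z + u) <= modc z + modc u.
Proof. exact: (@le_normcD R z u). Qed.
Lemma modcM (z u : R[i]) : modc (z * u) = modc z * modc u.
Proof. exact: Normc.normcM. Qed.
Lemma modc0 : modc (0 : R[i]) = 0.
Proof. exact: Normc.normc0. Qed.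
Lemma c0E (b : nat -> R[i]) : c0 b <-> forall e, 0 < e -> exists N, forall n, (N <= n)%N -> modc (b n) <= e.
Proof.
rewrite /c0; split.
  move=> /cvgrPdist_le H e e0; have := H e e0; case => N _ HN; exists N => n Nn.
  have := HN n Nn; by rewrite sub0r normrN ger0_norm ?modc_ge0.
move=> H; apply/cvgrPdist_le => e e0; have [N HN] := H e e0; exists N => // n Nn.
by rewrite sub0r normrN ger0_norm ?modc_ge0 //; apply: HN.
Qed.
Definition NN (I : eqType) (f : I -> R) (t : R) (n : nat) :=
  exists s : seq I, [/\ uniq s, (n < size s)%N & all (fun i => t < f i) s].

Lemma list_min (I : eqType) (f : I -> R) t (s : seq I) :
  all (fun i => t < f i) s -> exists t', t < t' /\ forall i, i \in s -> t' <= f i.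
Proof.
elim: s => [|x s IH] /=.
  by move=> _; exists (t + 1); split => //; rewrite ltrDl.
move=> /andP[tx /IH [t' [tt' H]]]; exists (Num.min t' (f x)); split.
  by rewrite lt_min tt' tx.
move=> i; rewrite in_cons => /orP[/eqP->|/H]; first by rewrite ge_min lexx orbT.
by move=> h; rewrite ge_min h.
Qed.

Lemma maximal_list (I : eqType) (P : pred I) n :
  ~ (exists s : seq I, [/\ uniq s, (n < size s)%N & all P s]) ->
  exists s : seq I, [/\ uniq s, (size s <= n)%N & forall i, P i -> i \in s].
Proof.
move=> H.
suff: forall d (s0 : seq I), uniq s0 -> all P s0 -> (n < size s0 + d)%N ->
  exists s : seq I, [/\ uniq s, (size s <= n)%N & forall i, P i -> i \in s].
  by move=> /(_ n.+1 [::]); apply.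
elim=> [|d IH] s0 u0 a0 sz.
  by exfalso; apply: H; exists s0; rewrite addn0 in sz.
have [Hall|] := pselect (forall i, P i -> i \in s0).
  exists s0; split => //; rewrite leqNgt; apply/negP => ns; apply: H; by exists s0.
move=> /existsNP [i /not_implyP [Pi ni]].
apply: (IH (i :: s0)) => /=.
- by rewrite u0 andbT; apply/negP.
- by rewrite a0 andbT.
- by rewrite addSnnS.
Qed.

Lemma rearr_gt (I : eqType) (f : I -> R) t n :
  (forall i, 0 <= f i) -> (exists M, forall i, f i <= M) -> 0 <= t ->
  (t < rearr f n <-> NN f t n).
Proof.
move=> f0 [M fM] t0.
set E := [set sup [set f i | i in [set i | i \notin s]] |
        s in [set s : seq I | (size s <= n)%N]].
have ubS : forall s : seq I, has_ubound [set f i | i in [set i | i \notin s]].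
  by move=> s; exists M => _ [i _ <-].
have supge0 : forall s : seq I, 0 <= sup [set f i | i in [set i | i \notin s]].
  move=> s; have [[i ni]|e] := pselect (exists i, i \notin s).
    by apply: le_trans (f0 i) _; apply: ub_le_sup (ubS s) _ _; exists i.
  suff -> : [set f i | i in [set i | i \notin s]] = set0 by rewrite sup0.
  by apply/seteqP; split => // _ [i /= ni _]; apply: e; exists i.
have Ene : E !=set0 by exists (sup [set f i | i in [set i | i \notin [::]]]); exists [::].
have Elb : has_lbound E by exists 0 => _ [s _ <-].
split.
  move=> tlt; apply: contrapT => nN.
  have [s [us sn Hs]] := maximal_list (P := fun i => t < f i) (n := n) nN.
  have : rearr f n <= t.
    apply: le_trans (ge_inf Elb _) _; first by exists s.
    have [[i ni]|e] := pselect (exists i, i \notin s).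
      apply: ge_sup; first by exists (f i); exists i.
      by move=> _ [j /= nj <-]; rewrite leNgt; apply/negP => /Hs; rewrite (negbTE nj).
    suff -> : [set f i | i in [set i | i \notin s]] = set0 by rewrite sup0.
    by apply/seteqP; split => // _ [i /= ni _]; apply: e; exists i.
  by rewrite leNgt tlt.
move=> [s0 [u0 sz0 a0]].
have [t' [tt' Ht']] := list_min a0.
apply: lt_le_trans tt' _.
apply: lb_le_inf => // _ [s /= ss <-].
have [i [is0 nis]] : exists i, i \in s0 /\ i \notin s.
  apply: contrapT => H.
  have sub : {subset s0 <= s}.
    move=> i is0; apply: contrapT => nis; apply: H; exists i; split => //; exact/negP.
  have := uniq_leq_size u0 sub; move: ss sz0; clear; lia.
apply: le_trans (Ht' _ is0) _; apply: ub_le_sup (ubS s) _ _; by exists i.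
Qed.

Lemma rearr_ge0 (I : eqType) (f : I -> R) n :
  (forall i, 0 <= f i) -> (exists M, forall i, f i <= M) -> 0 <= rearr f n.
Proof.
move=> f0 [M fM]; apply: lb_le_inf.
  by exists (sup [set f i | i in [set i | i \notin [::]]]); exists [::].
move=> _ [s _ <-].
have [[i ni]|e] := pselect (exists i, i \notin s).
  apply: le_trans (f0 i) _; apply: ub_le_sup; last by exists i.
  by exists M => _ [j _ <-].
suff -> : [set f i | i in [set i | i \notin s]] = set0 by rewrite sup0.
by apply/seteqP; split => // _ [i /= ni _]; apply: e; exists i.
Qed.

Definition bnd (I : Type) (f : I -> R) := exists M, forall i, f i <= M.

Lemma star_le_cnt (I : eqType) (f g : I -> R) n :
  (forall i, 0 <= f i) -> bnd f -> (forall i, 0 <= g i) -> bnd g ->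
  (forall t, 0 < t -> NN f t n -> NN g t n) -> rearr f n <= rearr g n.
Proof.
move=> f0 bf g0 bg H; rewrite leNgt; apply/negP => lt.
have g0' := rearr_ge0 n g0 bg.
set t := (rearr f n + rearr g n) / 2.
have t0 : 0 < t by rewrite /t; lra.
have tf : t < rearr f n by rewrite /t; lra.
have tg : rearr g n < t by rewrite /t; lra.
have /(H _ t0) := (rearr_gt n f0 bf (ltW t0)).1 tf.
move=> /((rearr_gt n g0 bg (ltW t0)).2) => gt; lra.
Qed.

Lemma rearr_mono (I : eqType) (f : I -> R) m n :
  (forall i, 0 <= f i) -> bnd f -> (n <= m)%N -> rearr f m <= rearr f n.
Proof.
move=> f0 bf nm; rewrite leNgt; apply/negP => lt.
have g0' := rearr_ge0 n f0 bf.
set t := (rearr f m + rearr f n) / 2.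
have t0 : 0 < t by rewrite /t; lra.
have tf : t < rearr f m by rewrite /t; lra.
have tg : rearr f n < t by rewrite /t; lra.
have [s [us ss al]] := (rearr_gt m f0 bf (ltW t0)).1 tf.
have : t < rearr f n.
  by apply/(rearr_gt n f0 bf (ltW t0)); exists s; split => //; apply: leq_ltn_trans nm ss.
lra.
Qed.

Lemma c0_bnd (b : nat -> R[i]) : c0 b -> bnd (fun k => modc (b k)).
Proof.
move=> /c0E /(_ 1 ltr01) [N HN].
exists (1 + \sum_(k < N) modc (b k)) => k.
have [kN|Nk] := ltnP k N.
  apply: le_trans (ler_wpDl ler01 (lexx _)).
  rewrite (bigD1 (Ordinal kN)) //= ler_wpDr //.
  by apply: sumr_ge0 => i _; apply: modc_ge0.
apply: le_trans (HN _ Nk) _; rewrite lerDl.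
by apply: sumr_ge0 => i _; apply: modc_ge0.
Qed.

Lemma gen_calkin (S J : set (nat -> R[i])) :
  calkin J -> S `<=` J -> calkin (calkin_gen S).
Proof.
move=> cJ SJ; split.
- by move=> b /(_ J cJ SJ); case: cJ => + _ _ _ _; apply.
- by move=> I [_ + _ _ _].
- by move=> b g Hb Hg I cI SI; case: (cI) => _ _ + _ _; apply; [apply: Hb|apply: Hg].
- by move=> c b Hb I cI SI; case: (cI) => _ _ _ + _; apply; apply: Hb.
- by move=> g b Hg cb le I cI SI; case: (cI) => _ _ _ _; apply; [apply: Hg| |].
Qed.

Lemma gen_min (S I : set (nat -> R[i])) : calkin I -> S `<=` I -> calkin_gen S `<=` I.
Proof. by move=> cI SI b; apply. Qed.

Lemma gen_sup (S : set (nat -> R[i])) : S `<=` calkin_gen S.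
Proof. by move=> b Sb I _; apply. Qed.
End S.

Section Main.
Variable R : realType.
Variables (a : nat -> R) (w C : R).
Hypothesis a0 : forall n, 0 <= a n.
Hypothesis adec : forall m n, (m <= n)%N -> a n <= a m.
Hypothesis acvg : a @ \oo --> (0 : R).
Hypothesis a01 : a 0%N <= 1.
Hypothesis w0 : 0 < w.
Hypothesis w1 : w < 1.
Hypothesis C0 : 0 < C.
Hypothesis HK : forall (j n : nat), (1 <= j)%N ->
     C * (\sum_(i < n.+1) ((Kw w a i)%:R : R)) ^+ 2 <= (Kw w a (n + j))%:R.

Let a' := fun n => ((a n)%:C)%C : R[i].

Lemma modca n : modc (a' n) = a n.
Proof. by rewrite /a' modcR ger0_norm. Qed.

Lemma c0a : c0 a'.
Proof.
rewrite /c0; have -> : (fun n => modc (a' n)) = a by apply: funext => n; rewrite modca.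
exact: acvg.
Qed.

Lemma thresh x : 0 < x -> exists S, forall j, x < a j <-> (j < S)%N.
Proof.
move=> x0; have x2 : 0 < x / 2 by lra.
have [N HN] := (c0E a').1 c0a (x / 2) x2.
have ex : exists j, a j <= x.
  exists N; have := HN N (leqnn N); rewrite modca => h; lra.
exists (ex_minn ex) => j; case: ex_minnP => S aS Smin; split.
  by move=> xj; rewrite ltnNge; apply/negP => /(adec) h; lra.
by move=> jS; rewrite ltNge; apply/negP => /Smin; rewrite leqNgt jS.
Qed.

Lemma sumK N S : (forall j, w ^+ N < a j <-> (j < S)%N) ->
  (\sum_(i < N) Kw w a i)%N = S.
Proof.
elim: N S => [|N IH] S HS.
  rewrite big_ord0; case: S HS => // S /(_ 0%N) [_ /(_ isT)]; by rewrite expr0 ltNge a01.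
have wN : 0 < w ^+ N by apply: exprn_gt0.
have [S0 H0] := thresh wN.
rewrite big_ord_recr /= (IH S0 H0) /Kw.
have -> : [set m | w ^+ N.+1 < a m <= w ^+ N] = `I_S `\` `I_S0.
  apply/seteqP; split => m /=.
    move=> /andP[/HS h1 h2]; split => //=.
    move=> hm; have h := (H0 m).2 hm; move: h2; by rewrite leNgt h.
  move=> [h1 h2]; apply/andP; split; first exact/HS.
  by rewrite leNgt; apply/negP => /H0.
rewrite (card_fset_set (@card_IID S S0)).
have : (S0 <= S)%N.
  rewrite leqNgt; apply/negP => /H0 h.
  have : (S < S)%N; last by rewrite ltnn.
  apply/HS; apply: lt_trans h; rewrite exprS.
  have w1' : 0 < 1 - w by rewrite subr_gt0.
  by have := mulr_gt0 w1' wN; rewrite mulrBl mul1r subr_gt0.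
lia.
Qed.

Definition D (b : nat -> R[i]) : Prop := c0 b /\ exists (c : R) (m : nat),
  [/\ 0 < c, (0 < m)%N &
     forall t n, 0 < t -> NN (fun k => modc (b k)) (c * t) n -> t < a (n %/ m)].

Lemma div_step m k q : (0 < m)%N -> (q * m < k)%N -> (q <= k.-1 %/ m)%N.
Proof. by move=> m0 h; rewrite leq_divRL //; lia. Qed.

Lemma D0 : D (fun _ => 0).
Proof.
split; first by apply/c0E => e e0; exists 0%N => n _ /=; rewrite modc0 ltW.
exists 1, 1%N; split => // t n t0 [s [_ sz al]].
case: s sz al => // i s _ /= /andP[]; rewrite modc0 mul1r => h; exfalso.
by move: h; rewrite ltNge ltW.
Qed.

Lemma DD b g : D b -> D g -> D (fun n => b n + g n).
Proof.
move=> [cb [c1 [m1 [c10 m10 Hb]]]] [cg [c2 [m2 [c20 m20 Hg]]]]; split.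
  apply/c0E => e e0; have e2 : 0 < e / 2 by rewrite divr_gt0.
  have [N1 H1] := (c0E b).1 cb _ e2; have [N2 H2] := (c0E g).1 cg _ e2.
  exists (maxn N1 N2) => n; rewrite geq_max => /andP[n1 n2].
  apply: le_trans (modcD _ _) _; rewrite (splitr e) lerD //; [exact: H1|exact: H2].
exists (c1 + c2), (m1 + m2)%N; split; [exact: addr_gt0|by rewrite addn_gt0 m10|].
move=> t n t0 [s [us sz al]].
set p := fun i => c1 * t < modc (b i).
set s1 := seq.filter p s; set s2 := seq.filter (predC p) s.
have ss : size s = (size s1 + size s2)%N by rewrite !size_filter count_predC.
set q := (n %/ (m1 + m2))%N.
have qn : (q * (m1 + m2) <= n)%N by apply: leq_trunc_div.
have [A|B] := ltnP (q * m1) (size s1).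
  have h : t < a ((size s1).-1 %/ m1).
    apply: Hb => //; exists s1; split; first exact: filter_uniq.
      have s1p : (0 < size s1)%N by apply: leq_ltn_trans A.
      by rewrite prednK.
    by rewrite /s1 filter_all.
  by apply: lt_le_trans h _; apply: adec; apply: div_step.
have B' : (q * m2 < size s2)%N.
  move: qn sz B; rewrite ss mulnDr; clearbody q; clear; lia.
have h : t < a ((size s2).-1 %/ m2).
  apply: Hg => //; exists s2; split; first exact: filter_uniq.
    have s2p : (0 < size s2)%N by apply: leq_ltn_trans B'.
    by rewrite prednK.
  apply/allP => i; rewrite mem_filter => /andP[/= np iS].
  move/allP: al => /(_ i iS) /= h1.
  have h2 := modcD (b i) (g i).
  rewrite /p -leNgt in np.
  rewrite ltNge; apply/negP => h3.
  move: h1; rewrite ltNge mulrDl; apply/negP/negPn.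
  by apply: le_trans h2 _; apply: lerD.
by apply: lt_le_trans h _; apply: adec; apply: div_step.
Qed.

Lemma DZ (c : R[i]) b : D b -> D (fun n => c * b n).
Proof.
move=> [cb [c1 [m1 [c10 m10 Hb]]]].
set k := modc c + 1.
have k0 : 0 < k by rewrite /k ltr_pwDr // modc_ge0.
have ck : modc c <= k by rewrite /k lerDl.
split.
  apply/c0E => e e0; have ek : 0 < e / k by rewrite divr_gt0.
  have [N HN] := (c0E b).1 cb _ ek; exists N => n Nn; rewrite modcM.
  apply: le_trans (_ : k * modc (b n) <= e).
    by apply: ler_wpM2r => //; apply: modc_ge0.
  by rewrite -ler_pdivlMl // mulrC; apply: HN.
exists (k * c1), m1; split => //; first exact: mulr_gt0.
move=> t n t0 [s [us sz al]]; apply: Hb => //; exists s; split => //.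
apply/allP => i iS; move/allP: al => /(_ i iS) /=; rewrite modcM => h.
rewrite ltNge; apply/negP => h2; move: h; rewrite ltNge; apply/negP/negPn.
have ct : 0 <= c1 * t by rewrite mulr_ge0 // ltW.
apply: le_trans (_ : modc c * (c1 * t) <= _).
  by apply: ler_wpM2l => //; apply: modc_ge0.
by rewrite -mulrA; apply: ler_wpM2r.
Qed.

Lemma DH g b : D g -> c0 b -> (forall n, star b n <= star g n) -> D b.
Proof.
move=> [cg [c [m [c0' m0 Hg]]]] cb le; split => //.
exists c, m; split => // t n t0 Hn; apply: Hg => //.
have ct : 0 <= c * t by rewrite mulr_ge0 // ltW.
apply/(rearr_gt n (fun i => modc_ge0 (g i)) (c0_bnd cg) ct).
apply: lt_le_trans (le n).
exact/(rearr_gt n (fun i => modc_ge0 (b i)) (c0_bnd cb) ct).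
Qed.

Lemma D_calkin : calkin D.
Proof.
split.
- by move=> b [].
- exact: D0.
- exact: DD.
- by move=> c b; apply: DZ.
- by move=> g b; apply: DH.
Qed.

Lemma uniq_big (s : seq nat) n : uniq s -> (n < size s)%N -> exists2 i, i \in s & (n <= i)%N.
Proof.
move=> us sz; apply: contrapT => H.
have sub : {subset s <= iota 0 n}.
  move=> i iS; rewrite mem_iota add0n /=; rewrite ltnNge; apply/negP => ni; apply: H; by exists i.
by have := uniq_leq_size us sub; rewrite size_iota leqNgt sz.
Qed.

Lemma Da : D a'.
Proof.
split; first exact: c0a.
exists 1, 1%N; split => // t n t0 [s [us sz al]].
have [i iS ni] := uniq_big us sz.
move/allP: al => /(_ i iS) /=; rewrite mul1r modca divn1 => h.
by apply: lt_le_trans h _; apply: adec.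
Qed.

Lemma D_sub (I : set (nat -> R[i])) : calkin I -> I a' -> D `<=` I.
Proof.
move=> cI Ia b [cb [c [m [c0' m0 Hb]]]].
case: (cI) => Ic0 I0 Iadd Iscal Iher.
pose E (r : nat) := fun i => if (i %% m == r)%N then a' (i %/ m) else 0.
have cE : forall r, c0 (E r).
  move=> r; apply/c0E => e e0.
  have [N HN] := (c0E a').1 c0a _ e0; exists (N * m)%N => i Ni.
  rewrite /E; case: ifP => _; last by rewrite modc0 ltW.
  by apply: HN; rewrite leq_divRL.
have IE : forall r, I (E r).
  move=> r; apply: (Iher a') => // n.
  apply: star_le_cnt; try by move=> ?; apply: modc_ge0.
  - exact: c0_bnd.
  - exact: c0_bnd c0a.
  move=> t t0 [s [us sz al]].
  have sr : forall i, i \in s -> (i %% m = r)%N.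
    move=> i iS; move/allP: al => /(_ i iS) /=; rewrite /E.
    case: eqP => // _; rewrite modc0 => h; exfalso; move: h; by rewrite ltNge ltW.
  exists (map (fun i => i %/ m)%N s); split; last 2 first.
  - by rewrite size_map.
  - apply/allP => _ /mapP [i iS ->]; move/allP: al => /(_ i iS) /=.
    by rewrite /E (sr i iS) eqxx.
  rewrite map_inj_in_uniq // => i j iS jS eq.
  by rewrite (divn_eq i m) (divn_eq j m) eq (sr i iS) (sr j jS).
pose B k := fun i => \sum_(r < k) E r i.
have IB : forall k, I (B k).
  elim=> [|k IH].
    have -> : B 0%N = (fun _ => 0) by apply: funext => i; rewrite /B big_ord0.
    exact: I0.
  have -> : B k.+1 = (fun i => B k i + E k i).
    by apply: funext => i; rewrite /B big_ord_recr.
  exact: Iadd.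
have Bm : forall i, B m i = a' (i %/ m).
  move=> i; rewrite /B (bigD1 (Ordinal (ltn_pmod i m0))) //= /E eqxx big1 ?addr0 //.
  move=> r /eqP nr; case: eqP => // e; exfalso; apply: nr; apply: val_inj => /=; by rewrite e.
pose G := fun i => (c%:C)%C * B m i.
have IG : I G by apply: Iscal.
apply: (Iher G) => // n.
apply: star_le_cnt; try by move=> ?; apply: modc_ge0.
- exact: c0_bnd.
- exact: c0_bnd (Ic0 _ IG).
move=> t t0 Hn.
have tc : 0 < t / c by rewrite divr_gt0.
have h : t / c < a (n %/ m).
  apply: Hb => //; by rewrite mulrC divfK ?gt_eqF.
exists (iota 0 n.+1); split; first exact: iota_uniq.
  by rewrite size_iota.
apply/allP => i; rewrite mem_iota add0n /= => ni.
rewrite /G modcM Bm modca modcR ger0_norm ?ltW //.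
rewrite -ltr_pdivrMl // mulrC.
apply: lt_le_trans h _; apply: adec; apply: leq_div2r; by rewrite -ltnS.
Qed.

Lemma wpow_small t : 0 < t -> exists k, w ^+ k < t.
Proof.
move=> t0.
have wn : `|w| < 1 by rewrite ger0_norm // ltW.
have /cvgrPdist_lt /(_ t t0) [N _ HN] := cvg_expr wn.
by exists N; have := HN N (leqnn N); rewrite /= sub0r normrN ger0_norm // exprn_ge0 // ltW.
Qed.

Lemma wmono i j : (i <= j)%N -> w ^+ j <= w ^+ i.
Proof.
move=> ij; rewrite -(subnKC ij) exprD.
rewrite -{2}[w ^+ i]mulr1; apply: ler_wpM2l.
  by apply: exprn_ge0; apply: ltW.
by apply: exprn_ile1; apply: ltW.
Qed.

Lemma cnt_bound (b : nat -> R[i]) (c1 : R) m1 (x : R) S (X : seq nat) :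
  (0 < m1)%N -> 0 < x ->
  (forall t n, 0 < t -> NN (fun k => modc (b k)) (c1 * t) n -> t < a (n %/ m1)) ->
  (forall j, x < a j <-> (j < S)%N) ->
  uniq X -> all (fun i => c1 * x < modc (b i)) X -> (size X <= S * m1)%N.
Proof.
move=> m10 x0 Hb HS uX aX.
case E: (size X) => [//|k].
have : x < a (k %/ m1) by apply: Hb => //; exists X; rewrite E.
move=> /HS; rewrite ltn_divLR //.
Qed.

Lemma tensor_gt (b g : nat -> R[i]) (t : R) n : c0 b -> c0 g -> 0 <= t ->
  t < modc (tensor b g n) -> NN (fun p : nat * nat => modc (b p.1 * g p.2)) t n.
Proof.
move=> cb cg t0.
set P := fun p : nat * nat => modc (b p.1 * g p.2).
have P0 : forall p, 0 <= P p by move=> p; apply: modc_ge0.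
have bP : bnd P.
  have [Mb HMb] := c0_bnd cb; have [Mg HMg] := c0_bnd cg.
  exists (Mb * Mg) => p; rewrite /P modcM; apply: ler_pM; try apply: modc_ge0; by [].
have mt : forall k, modc (tensor b g k) = rearr P k.
  by move=> k; rewrite /tensor modcR ger0_norm //; apply: rearr_ge0.
by rewrite mt => h; apply/(rearr_gt n P0 bP t0).
Qed.

Lemma tensor_cnt (b g : nat -> R[i]) (t : R) n : c0 b -> c0 g -> 0 <= t ->
  NN (fun k => modc (tensor b g k)) t n <->
  NN (fun p : nat * nat => modc (b p.1 * g p.2)) t n.
Proof.
move=> cb cg t0.
set P := fun p : nat * nat => modc (b p.1 * g p.2).
have P0 : forall p, 0 <= P p by move=> p; apply: modc_ge0.
have bP : bnd P.
  have [Mb HMb] := c0_bnd cb; have [Mg HMg] := c0_bnd cg.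
  exists (Mb * Mg) => p; rewrite /P modcM; apply: ler_pM; try apply: modc_ge0; by [].
have mt : forall k, modc (tensor b g k) = rearr P k.
  by move=> k; rewrite /tensor modcR ger0_norm //; apply: rearr_ge0.
split.
  move=> [s [us sz al]]; have [i iS ni] := uniq_big us sz.
  apply/(rearr_gt n P0 bP t0).
  move/allP: al => /(_ i iS) /=; rewrite mt => h.
  by apply: lt_le_trans h _; apply: rearr_mono.
move=> /(rearr_gt n P0 bP t0) h.
exists (iota 0 n.+1); split; first exact: iota_uniq.
  by rewrite size_iota.
apply/allP => i; rewrite mem_iota add0n /= => ni; rewrite mt.
by apply: lt_le_trans h _; apply: rearr_mono => //; rewrite -ltnS.
Qed.

Lemma D_tensor b g : D b -> D g -> D (tensor b g).
Proof.
move=> [cb [c1 [m1 [c10 m10 Hb]]]] [cg [c2 [m2 [c20 m20 Hg]]]].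
set P := fun p : nat * nat => modc (b p.1 * g p.2).
have hb : forall i, modc (b i) <= c1.
  move=> i; rewrite leNgt; apply/negP => h.
  have : 1 < a (0 %/ m1).
    by apply: Hb => //; exists [:: i]; rewrite /= mulr1 h.
  by rewrite div0n ltNge a01.
have hg : forall i, modc (g i) <= c2.
  move=> i; rewrite leNgt; apply/negP => h.
  have : 1 < a (0 %/ m2).
    by apply: Hg => //; exists [:: i]; rewrite /= mulr1 h.
  by rewrite div0n ltNge a01.
pose M0 := Num.Def.archi_bound (C^-1).
have HM0 : C^-1 < M0%:R by apply: archi_boundP; rewrite invr_ge0 ltW.
have M00 : (0 < M0)%N.
  rewrite lt0n; apply/negP => /eqP e; move: HM0; rewrite e ltNge invr_ge0 ltW //.
have w20 : 0 < w ^+ 2 by apply: exprn_gt0.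
pose c := c1 * c2 / w ^+ 2.
have cpos : 0 < c by rewrite /c !mulr_gt0 // invr_gt0.
pose M := (m1 * m2 * M0)%N.
have M_0 : (0 < M)%N by rewrite /M !muln_gt0 m10 m20 M00.
have key : forall t n, 0 < t -> NN P (c * t) n -> t < a (n %/ M).
  move=> t n t0 [s [us sz al]].
  have cP : forall p, p \in s -> c * t < P p by move=> p pS; move/allP: al => /(_ p pS).
  have [p0 p0s] : exists p, p \in s.
    by case: (s) sz => // p ? _; exists p; rewrite mem_head.
  have [tw|tw] := leP (w ^+ 2) t.
    exfalso; have := cP p0 p0s; rewrite /P modcM; apply/negP; rewrite -leNgt.
    apply: (@le_trans _ _ (c1 * c2)).
      by apply: ler_pM; rewrite ?modc_ge0.
    rewrite /c -mulrA; apply: ler_peMr; first by apply: mulr_ge0; apply: ltW.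
    by rewrite mulrC ler_pdivlMr // mul1r.
  have [k0 hk0] := wpow_small t0.
  have ex : exists k, w ^+ k < t by exists k0.
  case: (ex_minnP ex) => k wk kmin.
  have k3 : (3 <= k)%N.
    rewrite leqNgt; apply/negP => k2.
    have : w ^+ 2 <= w ^+ k by apply: wmono; rewrite -ltnS.
    by rewrite leNgt (lt_trans wk tw).
  pose N := (k - 2)%N.
  have kN : k = (N + 2)%N by rewrite /N subnK // (leq_trans (leqnSn 2) k3).
  have N1 : (1 <= N)%N by rewrite /N subn_gt0.
  have tN : t <= w ^+ N.+1.
    by rewrite leNgt; apply/negP => /kmin; rewrite kN addn2 ltnn.
  have wNt : w ^+ N * w ^+ 2 < t by rewrite -exprD -kN.
  have wN0 : 0 < w ^+ N by apply: exprn_gt0.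
  have wN10 : 0 < w ^+ N.+1 by apply: exprn_gt0.
  have low : forall p, p \in s -> c1 * w ^+ N < modc (b p.1) /\ c2 * w ^+ N < modc (g p.2).
    move=> p pS; have := cP p pS; rewrite /P modcM => h.
    have e1 : c1 * c2 * w ^+ N < modc (b p.1) * modc (g p.2).
      apply: le_lt_trans h; rewrite /c -[c1 * c2 / _ * t]mulrA; apply: ler_wpM2l.
        by apply: mulr_ge0; apply: ltW.
      by rewrite mulrC ler_pdivlMr //; apply: ltW.
    split; rewrite ltNge; apply/negP => h2; move: e1; apply/negP; rewrite -leNgt.
      rewrite mulrAC; apply: ler_pM; rewrite ?modc_ge0 //; apply: hg.
    rewrite -mulrA; apply: ler_pM; rewrite ?modc_ge0 //; apply: hb.
  have [S HS] := thresh wN0.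
  have [S' HS'] := thresh wN10.
  pose X := undup (map fst s); pose Y := undup (map snd s).
  have sX : (size X <= S * m1)%N.
    apply: (cnt_bound m10 wN0 Hb HS); first exact: undup_uniq.
    apply/allP => i; rewrite mem_undup => /mapP [p pS ->]; exact: (low p pS).1.
  have sY : (size Y <= S * m2)%N.
    apply: (cnt_bound m20 wN0 Hg HS); first exact: undup_uniq.
    apply/allP => i; rewrite mem_undup => /mapP [p pS ->]; exact: (low p pS).2.
  have sXY : (size s <= size X * size Y)%N.
    rewrite -(size_allpairs pair); apply: uniq_leq_size => // -[i j] pS.
    by apply: allpairs_f; rewrite mem_undup; apply/mapP; exists (i, j).
  have SK : (\sum_(i < N) Kw w a i)%N = S by apply: sumK.
  have SK' : (\sum_(i < N.+1) Kw w a i)%N = S' by apply: sumK.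
  have KS' : (Kw w a N <= S')%N by rewrite -SK' big_ord_recr /= leq_addl.
  have HKN := @HK 1%N N.-1 (leqnn 1).
  rewrite addn1 prednK // -natr_sum SK in HKN.
  have SS : (S * S <= M0 * S')%N.
    rewrite -(ler_nat R) natrM.
    apply: (@le_trans _ _ (C^-1 * S'%:R)).
      rewrite ler_pdivlMl // -expr2; apply: le_trans HKN _; by rewrite ler_nat.
    by rewrite natrM; apply: ler_wpM2r => //; apply: ltW.
  have nM : (n < M * S')%N.
    apply: (leq_trans sz); apply: (leq_trans sXY).
    apply: (leq_trans (leq_mul sX sY)).
    have -> : (S * m1 * (S * m2) = m1 * m2 * (S * S))%N by rewrite mulnACA mulnC.
    by rewrite /M -[(m1 * m2 * M0 * S')%N]mulnA leq_mul2l SS orbT.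
  have : w ^+ N.+1 < a (n %/ M) by apply: (HS' _).2; rewrite ltn_divLR // mulnC.
  exact: le_lt_trans tN.
split.
  apply/c0E => e e0.
  have ec : 0 < e / c by rewrite divr_gt0.
  have [N0 HN0] := (c0E a').1 c0a _ ec.
  exists (N0 * M)%N => n Nn.
  rewrite leNgt; apply/negP => h.
  move: (tensor_gt cb cg (ltW e0) h).
  rewrite -[e](@divfK _ c) ?gt_eqF // mulrC => /(key _ _ ec).
  have : (N0 <= n %/ M)%N by rewrite leq_divRL.
  by move=> /HN0; rewrite modca => h1 h2; move: h1; rewrite leNgt h2.
exists c, M; split => // t n t0 /(tensor_cnt n cb cg (ltW (mulr_gt0 cpos t0))).
exact: key.
Qed.

Lemma main_sec : calkin (calkin_span a') /\ stable (calkin_span a').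
Proof.
have span_eq : calkin_span a' = D.
  apply/seteqP; split.
    move=> b Hb; apply: (gen_min D_calkin _ Hb) => c ->; exact: Da.
  by move=> b Db I cI sI; apply: (D_sub cI (sI _ erefl)) Db.
rewrite span_eq; split; first exact: D_calkin.
rewrite /stable; set T := [set t | exists b g, [/\ D b, D g & t = tensor b g]].
have TD : T `<=` D by move=> t [b [g [Db Dg ->]]]; apply: D_tensor.
have cT := gen_calkin D_calkin TD.
apply/seteqP; split; first by move=> b Hb; apply: (gen_min D_calkin TD Hb).
apply: D_sub => //.
case: (cT) => cTc0 cT0 _ _ cTher.
have [a00|a0n] := eqVneq (a 0%N) 0.
  have -> : a' = (fun _ => 0); last exact: cT0.
  apply: funext => n; rewrite /a'.
  have -> : a n = 0.
    by apply/eqP; rewrite eq_le a0 andbT -a00; apply: adec.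
  by [].
pose g := fun n => (((a 0%N)^-1)%:C)%C * a' n.
have Dg : D g by apply: DZ; exact: Da.
have Tt : T (tensor a' g) by exists a', g; split => //; exact: Da.
have Gt := gen_sup Tt.
have a0p : 0 < a 0%N by rewrite lt_neqAle eq_sym a0n a0.
apply: (cTher _ _ Gt c0a) => n.
have ct : c0 (tensor a' g) by case: (TD _ Tt).
apply: star_le_cnt; try by move=> ?; apply: modc_ge0.
- exact: c0_bnd c0a.
- exact: c0_bnd ct.
move=> t t0 [s [us sz al]].
apply/(tensor_cnt n c0a (proj1 Dg) (ltW t0)).
exists (map (fun i => (i, 0%N)) s); split.
- by rewrite map_inj_uniq // => x y [].
- by rewrite size_map.
apply/allP => _ /mapP [i iS ->] /=.
move/allP: al => /(_ i iS) /=.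
rewrite modcM /g modcM !modca modcR ger0_norm ?invr_ge0 ?a0 //.
by rewrite mulVf ?gt_eqF // mulr1.
Qed.
End Main.

Theorem corollary2p9 (R : realType) (a : nat -> R) (w C : R) :
  (forall n, 0 <= a n) ->
  (forall m n, (m <= n)%N -> a n <= a m) ->
  a @ \oo --> (0 : R) ->
  a 0%N <= 1 ->
  0 < w -> w < 1 ->
  0 < C ->
  (forall (j n : nat), (1 <= j)%N ->
     C * (\sum_(i < n.+1) ((Kw w a i)%:R : R)) ^+ 2 <= (Kw w a (n + j))%:R) ->
  calkin (calkin_span (fun n => ((a n)%:C)%C)) /\
  stable (calkin_span (fun n => ((a n)%:C)%C)).
Proof.
move=> a0 adec acvg a01 w0 w1 C0 HK.
exact: (main_sec a0 adec acvg a01 w0 w1 C0 HK).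
Qed.
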